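(* Let $n\le k$ be positive integers and let $\mathcal{A},\mathcal{B}$ be $I$-structures. There is a homomorphism $f:\mathbb{H}_{n,k}\mathcal{A}\to\mathcal{B}$ if and only if Duplicator has a winning strategy in the game $+\mathrm{Fun}^{k}_{n}(\mathcal{A},\mathcal{B})$.
   Context: Structures are over a finite relational signature $\sigma\cup\{I\}$ with $I$ binary; an $I$-structure is one interpreting $I$ as the identity relation. For $m\in\mathbb{N}$, $[m]=\{1,\dots,m\}$. For a structure $\mathcal{A}$, $\mathbb{T}_k\mathcal{A}$ has universe the nonempty finite lists over $A\times[k]$; $\epsilon_{\mathcal{A}}(s)$ is the first component of the last pair of $s$; a tuple $(s_1,\dots,s_r)$ is in a relation $R^{\mathbb{T}_k\mathcal{A}}$ iff the $s_i$ are pairwise prefix-comparable, $(\epsilon_{\mathcal{A}}(s_1),\dots,\epsilon_{\mathcal{A}}(s_r))\in R^{\mathcal{A}}$, and whenever $s_i$ is a prefix of $s_j$ ending with $(a,p)$, no prefix of $s_j$ properly extending $s_i$ ends with a pair $(a',p)$. A list over $A\times[k]$ is basic if it has at most $n$ pairs with distinct pebble indices; $S_n(s)=[s]$ if $s$ is basic, else $S_n(s)=[a];S_n(t)$ with $s=a\cdot t$ and $a$ the longest basic prefix. For $p\in[k]$ and $S_n(s)=t;[s']$ ($s'$ the last block), $\alpha_n(s,p)=t;[s']$ if $|s'|=n$ or $p$ occurs in $s'$, else $t$. $[s;(a,i)]\approx_n[t;(b,j)]$ iff $a=b$ and $\alpha_n(s,i)=\alpha_n(t,j)$. $\mathbb{H}_{n,k}\mathcal{A}=\mathbb{T}_k\mathcal{A}/{\approx_n}$,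 where a tuple of classes is in a relation iff some choice of representatives is in it in $\mathbb{T}_k\mathcal{A}$. The game $+\mathrm{Fun}^{k}_{n}(\mathcal{A},\mathcal{B})$: positions are partial maps $\pi^a:[k]\rightharpoonup A$, $\pi^b:[k]\rightharpoonup B$, initially empty. Each round Duplicator provides a function $h:A\to B$ with $h(\pi^a(i))=\pi^b(i)$ for all $i$ in the domain of $\pi^a$; Spoiler picks $m\le n$ distinct indices $p_1,\dots,p_m\in[k]$ and elements $a_1,\dots,a_m\in A$; the position is updated by $\pi^a(p_l)=a_l$, $\pi^b(p_l)=h(a_l)$, other values unchanged. Spoiler wins if for some relation symbol $R$ of arity $r$ and indices $i_1,\dots,i_r$, $(\pi^a(i_1),\dots,\pi^a(i_r))\in R^{\mathcal{A}}$ but $(\pi^b(i_1),\dots,\pi^b(i_r))\notin R^{\mathcal{B}}$. Duplicator wins by playing forever without Spoiler winning. *)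

(* Defs.v *)
From mathcomp Require Import all_boot.
Set Implicit Arguments. Unset Strict Implicit. Unset Printing Implicit Defensive.

(* A finite relational signature sigma; the full signature is sigma + {I},
   encoded as [option (sym S)] with [None] the binary symbol I. *)
Record signature := Signature { sym : finType; arity : sym -> nat }.

Definition fsym (S : signature) : Type := option (sym S).
Definition far (S : signature) (s : fsym S) : nat :=
  match s with Some s' => arity s' | None => 2 end.

Record structure (S : signature) := Structure {
  car :> Type;
  rel : forall s : fsym S, ('I_(far s) -> car) -> Prop }.

Definition is_I_structure (S : signature) (M : structure S) : Prop :=
  forall x : 'I_2 -> M, @rel S M (None : fsym S) x <-> x ord0 = x ord_max.

Definition hom (S : signature) (M N : structure S) (f : M -> N) : Prop :=
  forall (s : fsym S) (x : 'I_(far s) -> M), @rel S M s x -> @rel S N s (fun i => f (x i)).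

(* Pebble indices [k] = {1..k} are represented by 'I_k = {0..k-1}.
   A nonempty list over A x [k] is represented as a pair (s, c) standing for
   the list s ++ [c] (= rcons s c); this is a bijection with nonempty lists. *)
Definition Tk (A : Type) (k : nat) : Type := (seq (A * 'I_k) * (A * 'I_k))%type.
Definition tlist (A : Type) k (u : Tk A k) : seq (A * 'I_k) := rcons u.1 u.2.
Definition eps (A : Type) k (u : Tk A k) : A := u.2.1.

Definition prefix (T : Type) (s t : seq T) : Prop := exists w, t = s ++ w.

Definition Trel (S : signature) (M : structure S) (k : nat) (s : fsym S)
    (x : 'I_(far s) -> Tk M k) : Prop :=
  (forall i j, prefix (tlist (x i)) (tlist (x j)) \/ prefix (tlist (x j)) (tlist (x i))) /\
  @rel S M s (fun i => eps (x i)) /\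
  (forall i j, prefix (tlist (x i)) (tlist (x j)) ->
     forall (t : seq (M * 'I_k)) (c : M * 'I_k),
       prefix (tlist (x i)) (rcons t c) ->
       size (tlist (x i)) < size (rcons t c) ->
       prefix (rcons t c) (tlist (x j)) ->
       c.2 <> (x i).2.2).

Definition TkS (S : signature) (M : structure S) (k : nat) : structure S :=
  @Structure S (Tk M k) (@Trel S M k).

Definition basic (A : Type) k (n : nat) (s : seq (A * 'I_k)) : bool :=
  (size s <= n) && uniq (map snd s).

Definition lbp (A : Type) k (n : nat) (s : seq (A * 'I_k)) : nat :=
  \max_(m < (size s).+1 | basic n (take m s)) m.

(* S_n computed with fuel; fuel = size s suffices when n > 0 *)
Fixpoint Sn_fuel (A : Type) k (n fuel : nat) (s : seq (A * 'I_k)) : seq (seq (A * 'I_k)) :=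
  match fuel with
  | 0 => [:: s]
  | f.+1 => if basic n s then [:: s]
            else take (lbp n s) s :: Sn_fuel n f (drop (lbp n s) s)
  end.

Definition Sn (A : Type) k (n : nat) (s : seq (A * 'I_k)) : seq (seq (A * 'I_k)) :=
  Sn_fuel n (size s) s.

Definition alpha (A : Type) k (n : nat) (s : seq (A * 'I_k)) (p : 'I_k)
    : seq (seq (A * 'I_k)) :=
  let B := Sn n s in
  let s' := last [::] B in
  let t := take (size B).-1 B in
  if (size s' == n) || (p \in map snd s') then B else t.

Definition approx (A : Type) k (n : nat) (u v : Tk A k) : Prop :=
  u.2.1 = v.2.1 /\ alpha n u.1 u.2.2 = alpha n v.1 v.2.2.

Definition Hcar (S : signature) (M : structure S) (n k : nat) : Type :=
  {X : Tk M k -> Prop | exists u, X = approx n u}.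

Definition Hrel (S : signature) (M : structure S) (n k : nat) (s : fsym S)
    (X : 'I_(far s) -> Hcar M n k) : Prop :=
  exists x : 'I_(far s) -> Tk M k, (forall i, sval (X i) (x i)) /\ @Trel S M k s x.

Definition HS (S : signature) (M : structure S) (n k : nat) : structure S :=
  @Structure S (Hcar M n k) (@Hrel S M n k).

Definition position (A B : Type) (k : nat) : Type :=
  (('I_k -> option A) * ('I_k -> option B))%type.

Definition init_pos (A B : Type) k : position A B k := (fun _ => None, fun _ => None).

Definition smove (A : Type) (k : nat) : Type := seq ('I_k * A).

Definition legal (A : Type) k (n : nat) (mv : smove A k) : bool :=
  (size mv <= n) && uniq (map fst mv).

Definition lookup (A : Type) k (mv : smove A k) (p : 'I_k) : option A :=
  ohead [seq x.2 | x <- mv & x.1 == p].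

Definition update (A B : Type) k (h : A -> B) (mv : smove A k) (P : position A B k)
    : position A B k :=
  (fun p => if lookup mv p is Some a then Some a else P.1 p,
   fun p => if lookup mv p is Some a then Some (h a) else P.2 p).

(* A Duplicator strategy maps the history of Spoiler moves so far
   (most recent first) to the function h she provides next. *)
Definition strategy (A B : Type) (k : nat) : Type := seq (smove A k) -> (A -> B).

Fixpoint pos (A B : Type) k (sg : strategy A B k) (hist : seq (smove A k)) : position A B k :=
  match hist with
  | [::] => init_pos A B k
  | mv :: h => update (sg h) mv (pos sg h)
  end.

Definition consistent (A B : Type) k (h : A -> B) (P : position A B k) : Prop :=
  forall i a, P.1 i = Some a -> P.2 i = Some (h a).

Definition spoiler_wins (S : signature) (M N : structure S) k (P : position M N k) : Prop :=
  exists (s : fsym S) (idx : 'I_(far s) -> 'I_k) (xa : 'I_(far s) -> M) (xb : 'I_(far s) -> N),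
    (forall j, P.1 (idx j) = Some (xa j)) /\ (forall j, P.2 (idx j) = Some (xb j)) /\
    @rel S M s xa /\ ~ @rel S N s xb.

Definition winning (S : signature) (M N : structure S) (n k : nat) (sg : strategy M N k) : Prop :=
  forall hist : seq (smove M k), all (legal n) hist ->
    consistent (sg hist) (pos sg hist) /\ ~ spoiler_wins (pos sg hist).

Definition duplicator_wins (S : signature) (M N : structure S) (n k : nat) : Prop :=
  exists sg : strategy M N k, winning n sg.

(* Main.v *)
Require Import Defs.
From mathcomp Require Import all_boot zify.
From Stdlib Require Import Classical ClassicalEpsilon FunctionalExtensionality PropExtensionality ProofIrrelevance.
Set Implicit Arguments. Unset Strict Implicit. Unset Printing Implicit Defensive.

Lemma pre_take (T : Type) (a w : seq T) : Defs.prefix a w <-> take (size a) w = a.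
Proof.
split; first by case=> x ->; rewrite take_size_cat.
by move=> H; exists (drop (size a) w); rewrite -{1}(cat_take_drop (size a) w) H.
Qed.

Lemma pre_size (T : Type) (a w : seq T) : Defs.prefix a w -> size a <= size w.
Proof. by case=> x ->; rewrite size_cat leq_addr. Qed.

Lemma pre_trans (T : Type) (a b c : seq T) : Defs.prefix a b -> Defs.prefix b c -> Defs.prefix a c.
Proof. by case=> x -> [y ->]; exists (x ++ y); rewrite catA. Qed.

Lemma pre_refl (T : Type) (a : seq T) : Defs.prefix a a.
Proof. by exists [::]; rewrite cats0. Qed.

Lemma pre_cat (T : Type) (a b : seq T) : Defs.prefix a (a ++ b).
Proof. by exists b. Qed.

Lemma pre_comp (T : Type) (a b w : seq T) : Defs.prefix a w -> Defs.prefix b w ->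
  Defs.prefix a b \/ Defs.prefix b a.
Proof.
move=> /pre_take Ha /pre_take Hb.
have gen : forall a b : seq T, take (size a) w = a -> take (size b) w = b -> size a <= size b ->
   Defs.prefix a b.
  move=> a' b' Ha' Hb' le; apply/pre_take; by rewrite -Hb' take_takel // -Ha'.
case: (leqP (size a) (size b)) => le; first by left; apply: gen.
by right; apply: gen => //; apply: ltnW.
Qed.

Definition alive (A : Type) k (u : Tk A k) (W : seq (A * 'I_k)) : Prop :=
  forall (t : seq (A * 'I_k)) (c : A * 'I_k),
    Defs.prefix (tlist u) (rcons t c) -> size (tlist u) < size (rcons t c) ->
    Defs.prefix (rcons t c) W -> c.2 <> u.2.2.

Lemma alive_all (A : Type) k (u : Tk A k) r :
  alive u (tlist u ++ r) <-> all (fun y => y.2 != u.2.2) r.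
Proof.
split.
- move=> H; apply/(all_nthP u.2) => j Hj; apply/eqP.
  apply: (H (tlist u ++ take j r) (nth u.2 r j)).
  + by exists (rcons (take j r) (nth u.2 r j)); rewrite rcons_cat.
  + by rewrite size_rcons size_cat ltnS leq_addr.
  + exists (drop j.+1 r); by rewrite rcons_cat -take_nth // -catA cat_take_drop.
- move=> Hall t c [w1 Hw1] Hsz [w2 Hw2].
  case/lastP: w1 Hw1 => [|w1' y] Hw1.
    by move: Hsz; rewrite Hw1 cats0 ltnn.
  rewrite -rcons_cat in Hw1; case/rcons_inj: Hw1 => Ht Hcy; subst y t.
  have : r = rcons w1' c ++ w2.
    have := f_equal (drop (size (tlist u))) Hw2.
    by rewrite drop_size_cat // rcons_cat -catA drop_size_cat.
  move=> Er; move: Hall; rewrite Er all_cat all_rcons.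
  by case/andP=> /andP[/eqP] .
Qed.

Lemma basic_cat (A : Type) k n (s t : seq (A * 'I_k)) : basic n (s ++ t) -> basic n s.
Proof.
rewrite /basic size_cat map_cat cat_uniq => /andP[H1 /andP[H2 _]].
by rewrite H2 andbT; apply: leq_trans H1; apply: leq_addr.
Qed.

Lemma basic_rcons_not (A : Type) k n (L : seq (A * 'I_k)) c :
  basic n L -> ~~ basic n (rcons L c) -> (size L == n) || (c.2 \in map snd L).
Proof.
rewrite /basic size_rcons map_rcons rcons_uniq => /andP[Hs Hu].
rewrite Hu andbT negb_and -ltnNge ltnS => /orP[H|H].
  by rewrite eqn_leq Hs H.
by rewrite negbK in H; rewrite H orbT.
Qed.

Lemma lbp_eq (A : Type) k n (b : seq (A * 'I_k)) c r :
  basic n b -> ~~ basic n (rcons b c) -> lbp n (b ++ c :: r) = size b.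
Proof.
move=> Hb Hbc; rewrite /lbp.
have Hsz : size b < (size (b ++ c :: r)).+1 by rewrite size_cat /= ltnS leq_addr.
apply/eqP; rewrite eqn_leq; apply/andP; split.
- apply/bigmax_leqP => i Hi; rewrite leqNgt; apply/negP => lt.
  have E : take i (b ++ c :: r) = rcons b c ++ take (i - (size b).+1) r.
    rewrite take_cat ltnNge (ltnW lt) /= -(subnSK lt) /=.
    by rewrite -cats1 -catA.
  by move: Hi; rewrite E => /basic_cat; apply/negP.
- have := @leq_bigmax_cond _ (fun i : 'I_(size (b ++ c :: r)).+1 => basic n (take i (b ++ c :: r)))
     (fun i => nat_of_ord i) (Ordinal Hsz).
  by rewrite /= take_size_cat //; apply.
Qed.

Definition link (A : Type) k n (b : seq (A * 'I_k)) (bs : seq (seq (A * 'I_k))) : bool :=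
  if bs is (c :: _) :: _ then ~~ basic n (rcons b c) else true.

Fixpoint greedy (A : Type) k n (bs : seq (seq (A * 'I_k))) : bool :=
  if bs is b :: bs' then [&& basic n b, 0 < size b, link n b bs' & greedy n bs'] else true.

Definition linkr (A : Type) k n (bs : seq (seq (A * 'I_k))) (b : seq (A * 'I_k)) : bool :=
  if bs is [::] then true else if b is c :: _ then ~~ basic n (rcons (last [::] bs) c) else true.

Lemma greedy_rcons (A : Type) k n (bs : seq (seq (A * 'I_k))) b :
  greedy n (rcons bs b) = [&& greedy n bs, basic n b, 0 < size b & linkr n bs b].
Proof.
elim: bs => [|b0 bs IH] /=; first by rewrite !andbT.
rewrite IH.
case: bs IH => [|b1 bs] IH /=.
  clear IH; case: b => [|c b] /=; first by rewrite !andbF.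
  by rewrite !andbT; case: (basic n b0); case: (0 < size b0); case: (~~ basic n (rcons b0 c)); case: (basic n (c :: b)).
by rewrite -!andbA.
Qed.

Lemma greedy_catl (A : Type) k n (bs1 bs2 : seq (seq (A * 'I_k))) :
  greedy n (bs1 ++ bs2) -> greedy n bs1.
Proof.
elim/last_ind: bs2 => [|bs2 b IH]; first by rewrite cats0.
by rewrite -rcons_cat greedy_rcons => /andP[/IH].
Qed.

Lemma size_flatten_ge (A : Type) k n (bs : seq (seq (A * 'I_k))) :
  greedy n bs -> size bs <= size (flatten bs).
Proof.
elim: bs => [|b bs IH] //= /and4P[_ Hb _ Hg].
by rewrite size_cat -add1n leq_add // IH.
Qed.

Lemma Sn_fuel_greedy (A : Type) k n (bs : seq (seq (A * 'I_k))) f :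
  greedy n bs -> 0 < size bs -> size bs <= f.+1 -> Sn_fuel n f (flatten bs) = bs.
Proof.
elim: bs f => [|b bs IH] f //= /and4P[Hb Hsb Hl Hg] _.
case: bs IH Hl Hg => [|b1 bs] IH Hl Hg.
  by rewrite cats0; case: f => //= f _; rewrite Hb.
case: b1 IH Hl Hg => [|c b1] IH Hl Hg; first by case/and4P: Hg.
rewrite /= in Hl.
case: f => [|f] //= Hf.
have -> : basic n (b ++ (c :: b1) ++ flatten bs) = false.
  apply/negP => H; move: Hl => /negP; apply.
  by move: H; rewrite -[(c :: b1) ++ _]/(c :: (b1 ++ flatten bs)) -cat_rcons => /basic_cat.
rewrite lbp_eq // take_size_cat // drop_size_cat //.
by congr (_ :: _); apply: (IH f).
Qed.

Lemma Sn_greedy (A : Type) k n (bs : seq (seq (A * 'I_k))) :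
  greedy n bs -> 0 < size bs -> Sn n (flatten bs) = bs.
Proof.
move=> Hg Hs; rewrite /Sn; apply: Sn_fuel_greedy => //.
apply: leq_trans (size_flatten_ge Hg) _; exact: leqnSn.
Qed.

Lemma alpha_nil (A : Type) k n (p : 'I_k) : 0 < n -> alpha n ([::] : seq (A * 'I_k)) p = [::].
Proof. by rewrite /alpha /Sn /=; case: n. Qed.

Lemma alpha_split (A : Type) k n (bs1 bs2 : seq (seq (A * 'I_k))) c a p d :
  0 < n -> greedy n (bs1 ++ (c ++ (a, p) :: d) :: bs2) -> alpha n (flatten bs1 ++ c) p = bs1.
Proof.
move=> Hn; rewrite -cat_rcons => /greedy_catl; rewrite greedy_rcons.
case/and4P=> Hg1 Hb Hsb Hl.
case: c Hb Hsb Hl => [|c0 c] Hb Hsb Hl.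
  rewrite cats0.
  case/lastP: bs1 Hg1 Hl => [|bs0 L] Hg1 Hl; first by apply: alpha_nil.
  rewrite /alpha Sn_greedy //; last by rewrite size_rcons.
  rewrite last_rcons.
  move: Hl; rewrite /linkr; case: bs0 Hg1 => [|b0 bs0] Hg1 /=;
  move: (Hg1); rewrite greedy_rcons => /and4P[_ HL _ _];
  rewrite ?last_rcons => Hl; by rewrite (basic_rcons_not HL Hl).
have Hg2 : greedy n (rcons bs1 (c0 :: c)).
  rewrite greedy_rcons Hg1 /=.
  move: Hb => /basic_cat -> /=.
  by move: Hl; rewrite /linkr.
rewrite /alpha -flatten_rcons Sn_greedy //; last by rewrite size_rcons.
rewrite last_rcons size_rcons /= -cats1 take_size_cat //.
move: Hb; rewrite /basic => /andP[Hs Hu].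
have -> : (size c).+1 == n = false.
  apply/negP => /eqP E; move: Hs; rewrite size_cat /= -E.
  lia.
move: Hu; rewrite map_cat cat_uniq => /and3P[_ Hh _].
suff -> : (p \in map snd (c0 :: c)) = false by [].
apply/negP => Hin; move: Hh => /negP; apply.
by apply/hasP; exists p => //=; rewrite inE eqxx.
Qed.

Definition full (A : Type) k n (bs : seq (seq (A * 'I_k))) : bool :=
  all (fun b => basic n b && (size b == n)) bs.

Lemma greedy_full_rcons (A : Type) k n (bs : seq (seq (A * 'I_k))) b :
  0 < n -> full n bs -> basic n b -> 0 < size b -> greedy n (rcons bs b).
Proof.
move=> Hn; elim/last_ind: bs b => [|bs L IH] b Hf Hb Hsb.
  by rewrite /= Hb Hsb.
move: Hf; rewrite /full all_rcons => /andP[/andP[HL /eqP HsL] Hf].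
rewrite greedy_rcons Hb Hsb IH //; last by rewrite HsL.
rewrite /linkr; case: b Hb Hsb => [|c b] // _ _.
case: bs IH Hf => [|b0 bs] _ _ /=; rewrite ?last_rcons /basic size_rcons HsL ltnn //.
Qed.

Lemma alpha_full (A : Type) k n (bs : seq (seq (A * 'I_k))) (a : A) p :
  0 < n -> full n bs -> alpha n (flatten bs) p = bs.
Proof.
move=> Hn Hf.
have := @alpha_split A k n bs [::] [::] a p [::] Hn.
rewrite cats0 cats1; apply; apply: greedy_full_rcons => //.
by rewrite /basic /= Hn.
Qed.

Lemma lookup_cons (A : Type) k (mv : smove A k) q' a q :
  lookup ((q', a) :: mv) q = if q' == q then Some a else lookup mv q.
Proof. by rewrite /lookup /=; case: (q' == q). Qed.

Lemma lookup_notin (A : Type) k (mv : smove A k) q :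
  q \notin map fst mv -> lookup mv q = None.
Proof.
elim: mv => [|[q' a] mv IH] //=; rewrite inE negb_or => /andP[Hq Hn].
by rewrite lookup_cons eq_sym (negbTE Hq) IH.
Qed.

Lemma lookup_hit (A : Type) k (mv1 mv2 : smove A k) q a :
  q \notin map fst mv1 -> lookup (mv1 ++ (q, a) :: mv2) q = Some a.
Proof.
elim: mv1 => [|[q' a'] mv IH] /=; first by rewrite lookup_cons eqxx.
rewrite inE negb_or => /andP[Hq Hn].
by rewrite lookup_cons eq_sym (negbTE Hq) IH.
Qed.

Lemma lookup_some_in (A : Type) k (mv : smove A k) q a :
  lookup mv q = Some a -> q \in map fst mv.
Proof.
elim: mv => [|[q' a'] mv IH] //=; rewrite lookup_cons inE.
case: eqP => [-> _|_ H]; first by rewrite eqxx.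
by rewrite (IH H) orbT.
Qed.

Lemma pos_cat (A B : Type) k (sg : strategy A B k) (hs h0 : seq (smove A k)) q :
  all (fun mv => q \notin map fst mv) hs ->
  (pos sg (hs ++ h0)).1 q = (pos sg h0).1 q /\ (pos sg (hs ++ h0)).2 q = (pos sg h0).2 q.
Proof.
elim: hs => [|mv hs IH] //= /andP[Hq Hall].
by rewrite /update /= lookup_notin //; apply: IH.
Qed.

Definition mvOf (A : Type) k (b : seq (A * 'I_k)) : smove A k := [seq (y.2, y.1) | y <- b].
Definition Hh (A : Type) k (bs : seq (seq (A * 'I_k))) : seq (smove A k) := rev (map (@mvOf A k) bs).

Lemma all_flat (T : Type) (P : pred T) (ss : seq (seq T)) : all P (flatten ss) = all (all P) ss.
Proof. by elim: ss => //= s ss IH; rewrite all_cat IH. Qed.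

Lemma notin_snd (A : Type) k (s : seq (A * 'I_k)) p :
  all (fun y => y.2 != p) s -> p \notin map snd s.
Proof.
by elim: s => //= y s IH /andP[H1 H2]; rewrite inE negb_or eq_sym H1 IH.
Qed.

Lemma fst_mvOf (A : Type) k (b : seq (A * 'I_k)) : map fst (mvOf b) = map snd b.
Proof. by rewrite /mvOf -map_comp. Qed.

Lemma split_blocks (T : Type) (bs : seq (seq T)) s y r :
  flatten bs = s ++ y :: r ->
  exists bs1 c d bs2, bs = bs1 ++ (c ++ y :: d) :: bs2 /\ flatten bs1 ++ c = s.
Proof.
elim: bs s => [|b bs IH] s /=; first by case: s.
move=> E.
case: (ltnP (size s) (size b)) => Hlt.
  exists [::], s, (take (size b - (size s).+1) r), bs; split => //=.
  have := f_equal (take (size b)) E; rewrite take_size_cat // => Eb.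
  rewrite {1}Eb take_cat ltnNge (ltnW Hlt) /= -(subnSK Hlt) //.
have Es : s = b ++ drop (size b) s.
  have Tb : take (size b) s = b.
    by rewrite -(@takel_cat (size b) _ s (y :: r) Hlt) -E take_size_cat.
  by rewrite -{1}(cat_take_drop (size b) s) Tb.
have E2 : flatten bs = drop (size b) s ++ y :: r.
  by have := f_equal (drop (size b)) E; rewrite drop_size_cat // {1}Es -catA drop_size_cat.
case: (IH _ E2) => bs1 [c [d [bs2 [-> Hc]]]].
by exists (b :: bs1), c, d, bs2; split => //=; rewrite -catA Hc -Es.
Qed.

Lemma Hh_cat (A : Type) k (bs1 bs2 : seq (seq (A * 'I_k))) b :
  Hh (bs1 ++ b :: bs2) = rev (map (@mvOf A k) bs2) ++ mvOf b :: Hh bs1.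
Proof. by rewrite /Hh map_cat rev_cat /= rev_cons cat_rcons. Qed.

Lemma pos_block (A B : Type) k n (sg : strategy A B k) (bs : seq (seq (A * 'I_k))) (u : Tk A k) r :
  0 < n -> greedy n bs -> flatten bs = u.1 ++ u.2 :: r -> all (fun y => y.2 != u.2.2) r ->
  (pos sg (Hh bs)).1 u.2.2 = Some u.2.1 /\
  (pos sg (Hh bs)).2 u.2.2 = Some (sg (Hh (alpha n u.1 u.2.2)) u.2.1).
Proof.
case: u => s [a p] /= Hn Hg E Hall.
case: (split_blocks E) => bs1 [c [d [bs2 [Ebs Hc]]]].
have Hr : r = d ++ flatten bs2.
  move: E; rewrite Ebs flatten_cat /= -Hc -!catA /= => E'.
  have := f_equal (drop (size (flatten bs1 ++ c))) E'; rewrite !catA !drop_size_cat //.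
  by case.
rewrite Ebs in Hg.
have Hal : alpha n s p = bs1 by rewrite -Hc; apply: alpha_split Hg.
rewrite Hal Ebs Hh_cat.
move: Hall; rewrite Hr all_cat => /andP[_ Hall2].
have Hnot : all (fun mv => p \notin map fst mv) (rev (map (@mvOf A k) bs2)).
  rewrite all_rev all_map; move: Hall2; rewrite all_flat.
  apply: sub_all => b' /= Hb'; rewrite fst_mvOf; exact: notin_snd.
have [-> ->] := pos_cat sg (mvOf (c ++ (a, p) :: d) :: Hh bs1) Hnot.
move: Hg; rewrite -cat_rcons => /greedy_catl; rewrite greedy_rcons => /and4P[_ Hb _ _].
move: Hb; rewrite /basic map_cat cat_uniq => /andP[_ /and3P[_ Hh _]].
have Hpc : p \notin map fst (mvOf c).
  rewrite fst_mvOf; apply/negP => Hin; move: Hh => /negP; apply.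
  by apply/hasP; exists p => //=; rewrite inE eqxx.
by rewrite /= /update /= /mvOf map_cat /= -/(mvOf c) lookup_hit.
Qed.

Lemma greedy_exists (A : Type) k n (W : seq (A * 'I_k)) :
  0 < n -> exists bs, greedy n bs /\ flatten bs = W.
Proof.
move=> Hn; elim/last_ind: W => [|W y [bs [Hg Hf]]]; first by exists [::].
have linkr_rc : forall (bs0 : seq (seq (A * 'I_k))) L c b,
    linkr n (rcons bs0 L) (c :: b) = ~~ basic n (rcons L c).
  by move=> bs0 L c b; case: bs0 => [|b0 bs0] //=; rewrite last_rcons.
have By : basic n [:: y] by rewrite /basic /= Hn.
case/lastP: bs Hg Hf => [|bs0 L] Hg Hf.
  by exists [:: [:: y]]; rewrite /= By -Hf.
move: (Hg); rewrite greedy_rcons => /and4P[Hg0 HL HsL Hl].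
case Hb: (basic n (rcons L y)).
  exists (rcons bs0 (rcons L y)); split.
    rewrite greedy_rcons Hg0 Hb size_rcons /=.
    by case: L HL HsL Hl {Hb Hf Hg} => [|c L] //.
  by rewrite flatten_rcons -Hf flatten_rcons rcons_cat.
exists (rcons (rcons bs0 L) [:: y]); split.
  by rewrite greedy_rcons Hg By /= linkr_rc Hb.
by rewrite flatten_rcons -Hf cats1.
Qed.

Lemma exW (A : Type) k r (x : 'I_r -> Tk A k) :
  (forall i j, Defs.prefix (tlist (x i)) (tlist (x j)) \/ Defs.prefix (tlist (x j)) (tlist (x i))) ->
  (forall i j, Defs.prefix (tlist (x i)) (tlist (x j)) ->
     forall (t : seq (A * 'I_k)) (c : A * 'I_k),
       Defs.prefix (tlist (x i)) (rcons t c) ->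
       size (tlist (x i)) < size (rcons t c) ->
       Defs.prefix (rcons t c) (tlist (x j)) ->
       c.2 <> (x i).2.2) ->
  exists W, forall i, exists r', W = tlist (x i) ++ r' /\ all (fun y => y.2 != (x i).2.2) r'.
Proof.
case: r x => [|r] x Hc Ha; first by exists [::] => [[]].
have Hcard : 0 < #|'I_r.+1| by rewrite card_ord.
have [m Hm] := @eq_bigmax ('I_r.+1) (fun i => size (tlist (x i))) Hcard.
exists (tlist (x m)) => i.
have Hp : Defs.prefix (tlist (x i)) (tlist (x m)).
  case: (Hc i m) => // [[w Hw]].
  have : size (tlist (x i)) <= size (tlist (x m)).
    by rewrite -Hm; apply: (@leq_bigmax _ (fun i => size (tlist (x i)))).
  rewrite Hw size_cat -{2}(addn0 (size (tlist (x m)))) leq_add2l leqn0 => /nilP Ew.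
  by rewrite Ew cats0; apply: pre_refl.
case: (Hp) => r' Hr'; exists r'; split => //.
apply/alive_all; rewrite -Hr'; exact: (Ha i m Hp).
Qed.

Lemma greedy_basic (A : Type) k n (bs : seq (seq (A * 'I_k))) : greedy n bs -> all (basic n) bs.
Proof. by elim: bs => //= b bs IH /and4P[-> _ _ /IH]. Qed.

Lemma backward (S : signature) (n k : nat) (A B : structure S) :
  0 < n -> duplicator_wins A B n k -> exists f : HS A n k -> B, hom f.
Proof.
move=> Hn [sg Hw].
pose F := fun u : Tk A k => sg (Hh (alpha n u.1 u.2.2)) u.2.1.
have HF : forall s (x : 'I_(far s) -> Tk A k), Trel x -> Defs.rel (fun i => F (x i)).
  move=> s x [Hc [Hr Ha]].
  case: (exW Hc Ha) => W HW.
  case: (greedy_exists W Hn) => bs [Hg Hf].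
  have Hleg : all (legal n) (Hh bs).
    rewrite /Hh all_rev all_map; apply: sub_all (greedy_basic Hg) => b /=.
    by rewrite /legal /mvOf size_map fst_mvOf.
  have [_ Hns] := Hw _ Hleg.
  apply: NNPP => Hnot; apply: Hns.
  have Hpb : forall j, (pos sg (Hh bs)).1 (x j).2.2 = Some (x j).2.1 /\
       (pos sg (Hh bs)).2 (x j).2.2 = Some (F (x j)).
    move=> j; case: (HW j) => r' [Er' Hall].
    apply: (pos_block sg Hn Hg _ Hall).
    by rewrite Hf Er' /tlist cat_rcons.
  exists s, (fun i => (x i).2.2), (fun i => eps (x i)), (fun i => F (x i)).
  split; [|split; [|split]] => //.
  - by move=> j; case: (Hpb j).
  - by move=> j; case: (Hpb j).
exists (fun X : HS A n k => F (proj1_sig (constructive_indefinite_description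
   (fun u => proj1_sig X = approx n u) (proj2_sig X)))).
move=> s X [x [HX Hr]].
have E : (fun i => F (proj1_sig (constructive_indefinite_description
   (fun u => proj1_sig (X i) = approx n u) (proj2_sig (X i)))))
         = (fun i => F (x i)).
  apply: functional_extensionality => i.
  case: (constructive_indefinite_description _ _) => u Hu /=.
  have := HX i; rewrite Hu => -[Ha Hal].
  by rewrite /F Ha Hal.
by rewrite E; apply: HF.
Qed.

Definition cls (S : signature) (A : structure S) n k (u : Tk A k) : HS A n k :=
  exist (fun X => exists u, X = approx n u) (approx n u) (ex_intro _ u erefl).

Lemma cls_approx (S : signature) (A : structure S) n k (u v : Tk A k) :
  approx n u v -> cls n u = cls n v.
Proof.
case=> H1 H2.
have E : approx n u = approx n v.
  apply: functional_extensionality => z; apply: propositional_extensionality.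
  rewrite /approx H1 H2; by split.
rewrite /cls; move: (ex_intro _ u _) (ex_intro _ v _).
rewrite E => p1 p2; by rewrite (proof_irrelevance _ p1 p2).
Qed.

Lemma cls_hom (S : signature) (A B : structure S) n k (f : HS A n k -> B) :
  hom f -> forall s (x : 'I_(far s) -> Tk A k), Trel x -> Defs.rel (fun i => f (cls n (x i))).
Proof.
move=> hf s x Hx; apply: (hf s (fun i => cls n (x i))).
by exists x; split.
Qed.

Lemma Trel_of (S : signature) (A : structure S) k s (x : 'I_(far s) -> Tk A k) W :
  (forall i, exists r, W = tlist (x i) ++ r /\ all (fun y => y.2 != (x i).2.2) r) ->
  Defs.rel (fun i => eps (x i)) -> Trel x.
Proof.
move=> HW Hr.
have Hp : forall i, Defs.prefix (tlist (x i)) W by move=> i; case: (HW i) => r [-> _]; exists r.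
have Ha : forall i, alive (x i) W.
  by move=> i; case: (HW i) => r [-> H]; apply/alive_all.
split; first by move=> i j; apply: pre_comp (Hp i) (Hp j).
split => // i j _ t c H1 H2 H3.
by apply: (Ha i) H1 H2 (pre_trans H3 (Hp j)).
Qed.

Lemma link2 (S : signature) (A B : structure S) k (F : Tk A k -> B) W (u v : Tk A k) :
  is_I_structure A -> is_I_structure B ->
  (forall s (x : 'I_(far s) -> Tk A k), Trel x -> Defs.rel (fun i => F (x i))) ->
  (exists r, W = tlist u ++ r /\ all (fun y => y.2 != u.2.2) r) ->
  (exists r, W = tlist v ++ r /\ all (fun y => y.2 != v.2.2) r) ->
  u.2.1 = v.2.1 -> F u = F v.
Proof.
move=> HA HB HF Hu Hv Huv.
pose x := fun i : 'I_2 => if i == ord0 then u else v.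
have Hx : @Trel S A k None x.
  apply: (@Trel_of S A k None x W).
    by move=> i; rewrite /x; case: (i == ord0).
  by apply/HA.
by have /HB := HF None x Hx.
Qed.

Definition Gf (A B : Type) k (F : Tk A k -> B) (p0 : 'I_k) (bs : seq (seq (A * 'I_k))) (a : A) : B :=
  F (flatten bs, (a, p0)).

Definition hf (A B : Type) k (F : Tk A k -> B) (p0 : 'I_k) (bs : seq (seq (A * 'I_k)))
    (P : position A B k) : A -> B :=
  fun a => epsilon (inhabits (Gf F p0 bs a))
    (fun b => (exists i, P.1 i = Some a /\ P.2 i = Some b) \/
              ((~ exists i b', P.1 i = Some a /\ P.2 i = Some b') /\ b = Gf F p0 bs a)).

Definition keepq (A B : Type) k (P : position A B k) (mv : smove A k) (q : 'I_k) : bool :=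
  if lookup mv q is Some a then
    (if excluded_middle_informative (P.1 q = Some a) then false else true)
  else false.

Definition appq (A B : Type) k (P : position A B k) (mv : smove A k) : seq 'I_k :=
  [seq q <- enum 'I_k | keepq P mv q].

Definition Qq (A B : Type) k n (P : position A B k) (mv : smove A k) : seq 'I_k :=
  appq P mv ++ take (n - size (appq P mv)) [seq q <- enum 'I_k | q \notin appq P mv].

Definition nextbs (A B : Type) k n (F : Tk A k -> B) (p0 : 'I_k) (bs : seq (seq (A * 'I_k)))
    (P : position A B k) (mv : smove A k) : seq (seq (A * 'I_k)) :=
  match mv with
  | [::] => bs
  | x :: _ => if nilp (appq P mv) then bs
              else rcons bs [seq (odflt x.2 ((update (hf F p0 bs P) mv P).1 q), q) | q <- Qq n P mv]
  end.

Fixpoint st (A B : Type) k n (F : Tk A k -> B) (p0 : 'I_k) (hist : seq (smove A k))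
    : seq (seq (A * 'I_k)) * position A B k :=
  match hist with
  | [::] => ([::], init_pos A B k)
  | mv :: h => let s := st n F p0 h in
      (nextbs n F p0 s.1 s.2 mv, update (hf F p0 s.1 s.2) mv s.2)
  end.

Definition sgf (A B : Type) k n (F : Tk A k -> B) (p0 : 'I_k) : strategy A B k :=
  fun hist => hf F p0 (st n F p0 hist).1 (st n F p0 hist).2.

Lemma pos_st (A B : Type) k n (F : Tk A k -> B) (p0 : 'I_k) hist :
  pos (sgf n F p0) hist = (st n F p0 hist).2.
Proof. by elim: hist => //= mv h ->. Qed.

Definition Inv (A B : Type) k n (F : Tk A k -> B) (bs : seq (seq (A * 'I_k))) (P : position A B k) : Prop :=
  full n bs /\
  forall i a, P.1 i = Some a -> exists u : Tk A k,
    (exists r, flatten bs = tlist u ++ r /\ all (fun y => y.2 != u.2.2) r) /\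
    u.2.1 = a /\ u.2.2 = i /\ P.2 i = Some (F u).

Lemma notin_all (T : eqType) (s : seq T) p : p \notin s -> all (fun q => q != p) s.
Proof. by elim: s => //= y s IH; rewrite inE negb_or eq_sym => /andP[-> /IH]. Qed.

Lemma hf_spec (A B : Type) k (F : Tk A k -> B) (p0 : 'I_k) bs (P : position A B k) a :
  (exists i, P.1 i = Some a /\ P.2 i = Some (hf F p0 bs P a)) \/
  ((~ exists i b', P.1 i = Some a /\ P.2 i = Some b') /\ hf F p0 bs P a = Gf F p0 bs a).
Proof.
rewrite /hf.
set Q := (fun b => _ \/ _).
have := @epsilon_spec B (inhabits (Gf F p0 bs a)) Q.
apply.
case: (classic (exists i b', P.1 i = Some a /\ P.2 i = Some b')) => H.
  by case: H => i [b' Hb]; exists b'; left; exists i.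
by exists (Gf F p0 bs a); right.
Qed.

Lemma cons_h (S : signature) (A B : structure S) n k (F : Tk A k -> B) (p0 : 'I_k) bs
   (P : position A B k) i a :
  is_I_structure A -> is_I_structure B ->
  (forall s (x : 'I_(far s) -> Tk A k), Trel x -> Defs.rel (fun i => F (x i))) ->
  Inv n F bs P -> P.1 i = Some a -> P.2 i = Some (hf F p0 bs P a).
Proof.
move=> HA HB HF [_ HI] Hi.
case: (hf_spec F p0 bs P a) => [[j [Hj1 Hj2]] | [Hno _]]; last first.
  by case: Hno; case: (HI i a Hi) => u [_ [_ [_ H]]]; exists i, (F u).
case: (HI i a Hi) => u [Hu [Hua [Hui ->]]].
case: (HI j a Hj1) => v [Hv [Hva [Hvj Hv2]]].
rewrite Hj2 in Hv2; rewrite Hv2; congr Some.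
by apply: (link2 HA HB HF Hu Hv); rewrite Hua Hva.
Qed.

Lemma L2 (S : signature) (A B : structure S) k (F : Tk A k -> B) bs (u : Tk A k) p :
  is_I_structure A -> is_I_structure B ->
  (forall s (x : 'I_(far s) -> Tk A k), Trel x -> Defs.rel (fun i => F (x i))) ->
  (exists r, flatten bs = tlist u ++ r /\ all (fun y => y.2 != u.2.2) r) ->
  p != u.2.2 -> F u = F (flatten bs, (u.2.1, p)).
Proof.
move=> HA HB HF [r [Er Hr]] Hp.
apply: (link2 HA HB HF (W := rcons (flatten bs) (u.2.1, p))) => //.
  exists (rcons r (u.2.1, p)); split; first by rewrite Er rcons_cat.
  by rewrite all_rcons Hp Hr.
by exists [::]; rewrite cats0.
Qed.

Lemma Gf_any (A B : Type) k n (F : Tk A k -> B) bs a p p' :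
  (forall u v, approx n u v -> F u = F v) -> 0 < n -> full n bs ->
  F (flatten bs, (a, p)) = F (flatten bs, (a, p')).
Proof.
move=> HFa Hn Hf; apply: HFa; split => //=.
by rewrite (alpha_full a p Hn Hf) (alpha_full a p' Hn Hf).
Qed.

Lemma h_eq (S : signature) (A B : structure S) n k (F : Tk A k -> B) (p0 : 'I_k) bs
   (P : position A B k) a i :
  is_I_structure A -> is_I_structure B ->
  (forall u v, approx n u v -> F u = F v) ->
  (forall s (x : 'I_(far s) -> Tk A k), Trel x -> Defs.rel (fun i => F (x i))) ->
  0 < n -> Inv n F bs P ->
  (forall j, P.1 j = Some a -> exists p, p != j) ->
  hf F p0 bs P a = F (flatten bs, (a, i)).
Proof.
move=> HA HB HFa HF Hn [Hf HI] Hex.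
case: (hf_spec F p0 bs P a) => [[j [Hj1 Hj2]] | [_ ->]]; last first.
  by rewrite /Gf; apply: (@Gf_any A B k n F bs a p0 i HFa Hn Hf).
case: (HI j a Hj1) => v [Hv [Hva [Hvj Hv2]]].
rewrite Hj2 in Hv2; case: Hv2 => ->.
case: (Hex j Hj1) => p Hp.
rewrite (L2 HA HB HF Hv (p := p)) ?Hvj // Hva.
exact: (@Gf_any A B k n F bs a p i HFa Hn Hf).
Qed.

Lemma all_snd (A : Type) k (s : seq (A * 'I_k)) i :
  all (fun y => y.2 != i) s = all (fun q => q != i) (map snd s).
Proof. by rewrite all_map. Qed.

Lemma step_same (S : signature) (A B : structure S) n k (F : Tk A k -> B) (p0 : 'I_k) bs
   (P : position A B k) mv :
  is_I_structure A -> is_I_structure B ->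
  (forall s (x : 'I_(far s) -> Tk A k), Trel x -> Defs.rel (fun i => F (x i))) ->
  Inv n F bs P -> (forall q, ~~ keepq P mv q) -> Inv n F bs (update (hf F p0 bs P) mv P).
Proof.
move=> HA HB HF HI Hk; have HI0 := HI; case: HI => Hf HI'; split => // i a.
have : (update (hf F p0 bs P) mv P).1 i = P.1 i /\ (update (hf F p0 bs P) mv P).2 i = P.2 i.
  move: (Hk i); rewrite /keepq /update /=; case E: (lookup mv i) => [a'|] //=.
  case: excluded_middle_informative => // Heq _.
  by rewrite Heq (cons_h p0 HA HB HF HI0 Heq).
by case=> -> ->; apply: HI'.
Qed.

Lemma step_new (S : signature) (A B : structure S) n k (F : Tk A k -> B) (p0 : 'I_k) bs
   (P : position A B k) mv (d : A) :
  is_I_structure A -> is_I_structure B ->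
  (forall u v, approx n u v -> F u = F v) ->
  (forall s (x : 'I_(far s) -> Tk A k), Trel x -> Defs.rel (fun i => F (x i))) ->
  0 < n -> n <= k -> Inv n F bs P -> legal n mv -> ~~ nilp (appq P mv) ->
  Inv n F (rcons bs [seq (odflt d ((update (hf F p0 bs P) mv P).1 q), q) | q <- Qq n P mv])
      (update (hf F p0 bs P) mv P).
Proof.
move=> HA HB HFa HF Hn Hnk HI Hleg Hne.
have HI0 := HI; case: HI => Hf HI'.
set h := hf F p0 bs P.
set P' := update h mv P.
have HC : forall i a, P.1 i = Some a -> P.2 i = Some (h a).
  by move=> i a Hia; apply: (cons_h p0 HA HB HF HI0 Hia).
have HK : forall q, ~~ keepq P mv q -> P'.1 q = P.1 q /\ P'.2 q = P.2 q.
  move=> q; rewrite /keepq /P' /update /=; case E: (lookup mv q) => [a|] //=.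
  case: excluded_middle_informative => // Heq _.
  by rewrite Heq (HC _ _ Heq).
have HP2 : forall q a, P'.1 q = Some a -> P'.2 q = Some (h a).
  move=> q a; rewrite /P' /update /=; case E: (lookup mv q) => [a'|]; first by case=> ->.
  exact: HC.
have Happ : forall q, (q \in appq P mv) = keepq P mv q.
  by move=> q; rewrite mem_filter mem_enum andbT.
set app := appq P mv in Hne Happ *.
set Q := Qq n P mv.
set blk := [seq (odflt d (P'.1 q), q) | q <- Q].
have Hsapp : size app <= n.
  move: Hleg; rewrite /legal => /andP[Hs _].
  apply: leq_trans Hs; rewrite -(size_map fst mv).
  apply: uniq_leq_size; first by apply: filter_uniq; apply: enum_uniq.
  move=> q; rewrite Happ /keepq; case E: (lookup mv q) => [a|] // _.
  exact: lookup_some_in E.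
have Hsum : size app + size [seq q <- enum 'I_k | q \notin app] = k.
  rewrite /app /appq !size_filter.
  rewrite (@eq_count _ (fun q => q \notin _) (predC (keepq P mv))); last first.
    by move=> q; rewrite /= -Happ.
  by rewrite count_predC size_enum_ord.
have HQu : uniq Q.
  rewrite /Q /Qq cat_uniq; apply/and3P; split.
  - by apply: filter_uniq; apply: enum_uniq.
  - apply/hasP => -[q /mem_take]; rewrite mem_filter => /andP[Hq _] Hq'.
    by rewrite Hq' in Hq.
  - by apply: take_uniq; apply: filter_uniq; apply: enum_uniq.
have HQs : size Q = n.
  rewrite /Q /Qq size_cat size_takel; first by rewrite -/app; lia.
  change (n - size app <= size [seq q <- enum 'I_k | q \notin app]); lia.
have HappQ : forall q, q \in app -> q \in Q by move=> q Hq; rewrite /Q /Qq mem_cat Hq.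
have Hsnd : map snd blk = Q by rewrite /blk -map_comp; apply: map_id.
have Hsb : size blk = n by rewrite size_map.
have Hbb : basic n blk by rewrite /basic Hsnd Hsb leqnn HQu.
have Hgr : greedy n (rcons bs blk) by apply: greedy_full_rcons => //; rewrite Hsb.
split; first by rewrite /full all_rcons Hbb Hsb eqxx.
move=> i a Hi; rewrite flatten_rcons.
case HiQ : (i \in Q); last first.
  have Hia : ~~ keepq P mv i.
    by rewrite -Happ; apply/negP => /HappQ; rewrite HiQ.
  case: (HK i Hia) => E1 E2; rewrite E1 in Hi.
  case: (HI' i a Hi) => u [[r [Er Hr]] [Hua [Hui Hu2]]].
  exists u; split; last by rewrite E2.
  exists (r ++ blk); split; first by rewrite Er catA.
  by rewrite all_cat Hr all_snd Hsnd Hui notin_all // HiQ.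
set idx := index i Q.
have Hidx : idx < size blk by rewrite size_map index_mem.
have Hnth : nth (d, i) blk idx = (a, i).
  by rewrite (nth_map i) /idx ?nth_index ?Hi // index_mem.
have Eblk : blk = take idx blk ++ (a, i) :: drop idx.+1 blk.
  by rewrite -Hnth -drop_nth // cat_take_drop.
have Hd : i \notin drop idx.+1 Q.
  have := HQu; rewrite -{1}(cat_take_drop idx Q) (drop_nth i) ?index_mem //.
  by rewrite /idx nth_index // cat_uniq /= => /and4P[].
exists (flatten bs ++ take idx blk, (a, i)); split.
  exists (drop idx.+1 blk); split.
    by rewrite /tlist /= {1}Eblk cat_rcons catA.
  by rewrite all_snd map_drop Hsnd notin_all.
split => //; split => //.
rewrite (HP2 i a Hi); congr Some.
have -> : F (flatten bs ++ take idx blk, (a, i)) = F (flatten bs, (a, i)).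
  apply: HFa; split => //=.
  rewrite (alpha_full a i Hn Hf).
  apply: (@alpha_split A k n bs [::] _ a i (drop idx.+1 blk) Hn).
  by rewrite -Eblk cats1.
rewrite /h; apply: (h_eq p0 i HA HB HFa HF Hn HI0) => j Hj.
case: (eqVneq j i) => [Eji | Hji]; last by exists i; rewrite eq_sym.
subst j.
case Hia : (i \in app).
  move: Hia; rewrite Happ /keepq; case E: (lookup mv i) => [a''|] //.
  case: excluded_middle_informative => // Hneq _.
  move: Hi; rewrite /P' /update /= E => -[Ea]; subst a''.
  by case: Hneq.
move: Hne; case Eapp: app => [|q'' app'] // _.
exists q''; apply/eqP => Eq; subst q''.
by rewrite Eapp inE eqxx in Hia.
Qed.

Lemma step (S : signature) (A B : structure S) n k (F : Tk A k -> B) (p0 : 'I_k) bs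
   (P : position A B k) mv :
  is_I_structure A -> is_I_structure B ->
  (forall u v, approx n u v -> F u = F v) ->
  (forall s (x : 'I_(far s) -> Tk A k), Trel x -> Defs.rel (fun i => F (x i))) ->
  0 < n -> n <= k -> Inv n F bs P -> legal n mv ->
  Inv n F (nextbs n F p0 bs P mv) (update (hf F p0 bs P) mv P).
Proof.
move=> HA HB HFa HF Hn Hnk HI.
rewrite /nextbs; case: mv => [|x mv'] Hleg.
  by apply: step_same => // q; rewrite /keepq /lookup.
case Hnil: (nilp (appq P (x :: mv'))).
  apply: step_same => // q; apply/negP => Hk.
  have : q \in appq P (x :: mv') by rewrite mem_filter mem_enum andbT.
  by move/nilP: Hnil => ->.
by apply: step_new => //; rewrite Hnil.
Qed.

Lemma Inv_st (S : signature) (A B : structure S) n k (F : Tk A k -> B) (p0 : 'I_k) hist :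
  is_I_structure A -> is_I_structure B ->
  (forall u v, approx n u v -> F u = F v) ->
  (forall s (x : 'I_(far s) -> Tk A k), Trel x -> Defs.rel (fun i => F (x i))) ->
  0 < n -> n <= k -> all (legal n) hist ->
  Inv n F (st n F p0 hist).1 (st n F p0 hist).2.
Proof.
move=> HA HB HFa HF Hn Hnk; elim: hist => [|mv h IH] /=.
  by move=> _; split => // i a.
by case/andP=> Hl Hh; apply: step => //; apply: IH.
Qed.

Lemma forward (S : signature) (n k : nat) (A B : structure S) :
  0 < n -> n <= k -> is_I_structure A -> is_I_structure B ->
  (exists f : HS A n k -> B, hom f) -> duplicator_wins A B n k.
Proof.
move=> Hn Hnk HA HB [f hf].
have p0 : 'I_k := Ordinal (leq_trans Hn Hnk).
pose F := fun u : Tk A k => f (cls n u).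
have HFa : forall u v, approx n u v -> F u = F v.
  by move=> u v H; rewrite /F (cls_approx H).
have HF : forall s (x : 'I_(far s) -> Tk A k), Trel x -> Defs.rel (fun i => F (x i)).
  exact: cls_hom.
exists (sgf n F p0) => hist Hleg.
rewrite pos_st.
have HI := Inv_st p0 HA HB HFa HF Hn Hnk Hleg.
split.
  by move=> i a Hi; apply: (cons_h p0 HA HB HF HI Hi).
case=> s [idx [xa [xb [H1 [H2 [Hr Hnr]]]]]].
case: (HI) => Hf HI'.
have Hux := fun j => HI' _ _ (H1 j).
pose ux := fun j => proj1_sig (constructive_indefinite_description _ (Hux j)).
have Hux' : forall j, _ := fun j => proj2_sig (constructive_indefinite_description _ (Hux j)).
have HT : Trel ux.
  apply: (@Trel_of S A k s ux (flatten (st n F p0 hist).1)).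
    by move=> j; case: (Hux' j).
  have -> : (fun i => eps (ux i)) = xa.
    by apply: functional_extensionality => j; case: (Hux' j) => _ [].
  exact: Hr.
apply: Hnr.
have -> : xb = (fun i => F (ux i)).
  apply: functional_extensionality => j; case: (Hux' j) => _ [_ [Hj Hp]].
  by move: (H2 j); rewrite Hp => -[->].
exact: HF.
Qed.

Theorem lemma3p10 (S : signature) (n k : nat) (A B : structure S) :
  0 < n -> n <= k -> is_I_structure A -> is_I_structure B ->
  (exists f : HS A n k -> B, hom f) <-> duplicator_wins A B n k.
Proof.
move=> Hn Hnk HA HB; split; first exact: forward.
exact: backward.
Qed.
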